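(* Let $\mathcal R$ be a Riemann surface, $f:\mathcal R\to\mathrm{Nil}_3$ a conformal minimal immersion which is nowhere vertical with upward normal, and $g:\mathcal R\to\mathbb D=\{|w|<1\}\cong\mathbb H^2$ its normal Gauss map. Let $\gamma\in\mathrm{Aut}(\mathcal R)$. (a) If $f\circ\gamma=\rho\circ f$ for some $\rho=(p,e^{i\theta})\in\mathrm{Iso}_\circ(\mathrm{Nil}_3)$, then $g\circ\gamma=e^{i\theta}g$, i.e. $g$ is symmetric with respect to $(\gamma,R)$ where $R$ is the rotation of $\mathbb H^2$ about $0$ by the angle $\theta$ of the fiber rotation of $\rho$. (b) Conversely, if $g\circ\gamma=e^{i\theta}g$ for some $\theta\in\mathbb R$ (i.e. $g\circ\gamma=R\circ g$ with $R$ a rotation about $0$), then there exists $\rho\in\mathrm{Iso}_\circ(\mathrm{Nil}_3)$ whose fiber rotation has angle $\theta$ such that $f\circ\gamma=\rho\circ f$.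
   Context: $\mathrm{Nil}_3$ denotes $\mathbb R^3$ with the group law $(a_1,a_2,a_3)\cdot(x_1,x_2,x_3)=(a_1+x_1,a_2+x_2,a_3+x_3+\tfrac12(a_1x_2-a_2x_1))$ and the left-invariant Riemannian metric $dx_1^2+dx_2^2+(dx_3+\tfrac12(x_2dx_1-x_1dx_2))^2$; its center is $\{(0,0,c):c\in\mathbb R\}$. The identity component of its isometry group is $\mathrm{Iso}_\circ(\mathrm{Nil}_3)\cong\mathrm{Nil}_3\rtimes\mathrm U_1$, where $(a,e^{i\theta})$ acts by $(a,e^{i\theta}).(x_1,x_2,x_3)=a\cdot(\cos\theta\, x_1-\sin\theta\, x_2,\ \sin\theta\, x_1+\cos\theta\, x_2,\ x_3)$, and the group law is composition of these maps. The number $\theta$ (mod $2\pi$) is the angle of the fiber rotation of $(a,e^{i\theta})$; elements with $\theta=0$ are identified with $\mathrm{Nil}_3$ (left translations). Normal Gauss map: let $e_1,e_2,e_3$ be the standard basis of the Lie algebra $\mathfrak{nil}_3\cong\mathbb R^3$ (with $[e_1,e_2]=e_3$). For a conformal immersion $f$ and local conformal coordinate $z$, write $f^{-1}\partial_z f=\phi_1e_1+\phi_2e_2+\phi_3e_3$ (left translation to the identity). There are functions $\psi_1,\psi_2$ (unique up to a common sign) with $\phi_1=\overline{\psi_2}^2-\psi_1^2$, $\phi_2=i(\overline{\psi_2}^2+\psi_1^2)$, $\phi_3=2\psi_1\overline{\psi_2}$. The left-translated unit normal is $f^{-1}N=\big(2\,\mathrm{Re}(\psi_1\psi_2)e_1+2\,\mathrm{Im}(\psi_1\psi_2)e_2+(|\psi_1|^2-|\psi_2|^2)e_3\big)/(|\psi_1|^2+|\psi_2|^2)$,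 and the normal Gauss map is $g=\psi_2/\overline{\psi_1}$ (stereographic projection of $f^{-1}N$ from the south pole). $f$ is nowhere vertical if $|\psi_1|\ne|\psi_2|$ everywhere (the vector field $\partial_{x_3}$ is nowhere tangent), and has upward normal if $|\psi_1|>|\psi_2|$, so that $g$ takes values in the unit disk, viewed as the Poincaré model of $\mathbb H^2=\mathrm{SU}_{1,1}/\mathrm U_1$. *)

(* Defs.v *)
From Stdlib Require Import Reals List.
From Coquelicot Require Import Coquelicot.
Set Implicit Arguments.
Open Scope R_scope.

Definition Nil3 := (R * R * R)%type.
Definition n1 (x : Nil3) : R := fst (fst x).
Definition n2 (x : Nil3) : R := snd (fst x).
Definition n3 (x : Nil3) : R := snd x.

Definition nil_mul (a x : Nil3) : Nil3 :=
  (n1 a + n1 x, n2 a + n2 x, n3 a + n3 x + / 2 * (n1 a * n2 x - n2 a * n1 x)).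

Definition fiber_rot (theta : R) (x : Nil3) : Nil3 :=
  (cos theta * n1 x - sin theta * n2 x, sin theta * n1 x + cos theta * n2 x, n3 x).

(* the element (p, e^{i theta}) of Iso_o(Nil_3) = Nil_3 x| U_1, acting on Nil_3 *)
Definition iso_act (p : Nil3) (theta : R) (x : Nil3) : Nil3 :=
  nil_mul p (fiber_rot theta x).

(* components, in the left-invariant orthonormal frame e1,e2,e3 (i.e. after
   left translation to the identity), of a tangent vector v at the point x,
   for the metric dx1^2+dx2^2+(dx3+1/2(x2 dx1 - x1 dx2))^2 *)
Definition left_comp (x v : Nil3) : Nil3 :=
  (n1 v, n2 v, n3 v + / 2 * (n2 x * n1 v - n1 x * n2 v)).

Definition dot3 (u v : Nil3) : R := n1 u * n1 v + n2 u * n2 v + n3 u * n3 v.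
Definition cross3 (u v : Nil3) : Nil3 :=
  (n2 u * n3 v - n3 u * n2 v, n3 u * n1 v - n1 u * n3 v, n1 u * n2 v - n2 u * n1 v).

(* symmetric part of the Levi-Civita connection on left-invariant fields of
   nil_3 ([e1,e2] = e3):  nabla_A A  *)
Definition nabla_sym (A : Nil3) : Nil3 := (n2 A * n3 A, - (n1 A * n3 A), 0).

Definition dx (u : C -> R) : C -> R := fun z => Derive (fun t => u (t, snd z)) (fst z).
Definition dy (u : C -> R) : C -> R := fun z => Derive (fun t => u (fst z, t)) (snd z).

Inductive pdir := Px | Py.
Fixpoint pder (l : list pdir) (u : C -> R) : C -> R :=
  match l with
  | nil => u
  | Px :: l' => dx (pder l' u)
  | Py :: l' => dy (pder l' u)
  end.

Definition smooth_on (D : C -> Prop) (u : C -> R) : Prop :=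
  forall (l : list pdir) (z : C), D z ->
    ex_derive (fun t => pder l u (t, snd z)) (fst z) /\
    ex_derive (fun t => pder l u (fst z, t)) (snd z) /\
    continuous (pder l u) z.

Definition C_holo_at (h : C -> C) (z : C) : Prop := ex_derive (K := C_AbsRing) h z.

Record atlas (X : Type) := {
  chart : Type;
  cdom : chart -> C -> Prop;
  cpar : chart -> C -> X             (* psi_i : D_i -> X, inverse of the chart map *)
}.

Section Surf.
Variable X : Type.
Variable A : atlas X.

Definition s_open (O : X -> Prop) : Prop :=
  forall i, open (fun z => cdom A i z /\ O (cpar A i z)).

Definition overlap (i j : chart A) (z : C) : Prop :=
  cdom A i z /\ exists w, cdom A j w /\ cpar A j w = cpar A i z.

Definition riemann_surface : Prop :=
  (forall i, open (cdom A i)) /\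
  (forall i z w, cdom A i z -> cdom A i w -> cpar A i z = cpar A i w -> z = w) /\
  (forall x, exists i z, cdom A i z /\ cpar A i z = x) /\
  (forall i j, open (overlap i j) /\
     exists h : C -> C, forall z, overlap i j z ->
       cdom A j (h z) /\ cpar A j (h z) = cpar A i z /\ C_holo_at h z) /\
  (forall x y, x <> y -> exists U V, s_open U /\ s_open V /\ U x /\ V y /\
       forall p, ~ (U p /\ V p)) /\
  (forall U V, s_open U -> s_open V -> (forall p, U p \/ V p) ->
       (forall p, ~ (U p /\ V p)) -> (exists p, U p) -> forall p, U p).

Definition holo_map (gam : X -> X) : Prop :=
  (forall O, s_open O -> s_open (fun p => O (gam p))) /\
  forall i j, exists h : C -> C, forall z,
    cdom A i z -> (exists w, cdom A j w /\ cpar A j w = gam (cpar A i z)) ->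
    cdom A j (h z) /\ cpar A j (h z) = gam (cpar A i z) /\ C_holo_at h z.

Definition automorphism (gam : X -> X) : Prop :=
  exists gam', (forall p, gam' (gam p) = p) /\ (forall p, gam (gam' p) = p) /\
    holo_map gam /\ holo_map gam'.

Variable f : X -> Nil3.

Definition floc (i : chart A) (k : nat) : C -> R := fun z =>
  match k with 0%nat => n1 (f (cpar A i z)) | 1%nat => n2 (f (cpar A i z))
             | _ => n3 (f (cpar A i z)) end.

Definition Fx (i : chart A) (z : C) : Nil3 := (dx (floc i 0) z, dx (floc i 1) z, dx (floc i 2) z).
Definition Fy (i : chart A) (z : C) : Nil3 := (dy (floc i 0) z, dy (floc i 1) z, dy (floc i 2) z).

Definition Lx (i : chart A) (z : C) : Nil3 := left_comp (f (cpar A i z)) (Fx i z).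
Definition Ly (i : chart A) (z : C) : Nil3 := left_comp (f (cpar A i z)) (Fy i z).

Definition smooth_map : Prop :=
  forall i k, smooth_on (cdom A i) (floc i k).

Definition conformal_immersion : Prop :=
  smooth_map /\
  forall i z, cdom A i z ->
    dot3 (Lx i z) (Lx i z) = dot3 (Ly i z) (Ly i z) /\
    0 < dot3 (Lx i z) (Lx i z) /\ dot3 (Lx i z) (Ly i z) = 0.

(* tension  nabla_{d_x} f_x + nabla_{d_y} f_y, in the basis e1,e2,e3 *)
Definition tension (i : chart A) (z : C) : Nil3 :=
  let c k v := match k with 0%nat => n1 v | 1%nat => n2 v | _ => n3 v end in
  let d k := dx (fun w => c k (Lx i w)) z + dy (fun w => c k (Ly i w)) z in
  let s := nabla_sym (Lx i z) in let s' := nabla_sym (Ly i z) in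
  (d 0%nat + n1 s + n1 s', d 1%nat + n2 s + n2 s', d 2%nat + n3 s + n3 s').

Definition unit_normal (i : chart A) (z : C) : Nil3 :=
  let c := cross3 (Lx i z) (Ly i z) in
  let r := sqrt (dot3 c c) in (n1 c / r, n2 c / r, n3 c / r).

(* minimal: mean curvature zero, i.e. the trace of the second fundamental form
   (normal component of the tension in a conformal chart) vanishes *)
Definition minimal : Prop :=
  forall i z, cdom A i z -> dot3 (tension i z) (unit_normal i z) = 0.

Definition nowhere_vertical : Prop :=
  forall i z, cdom A i z -> n3 (unit_normal i z) <> 0.
Definition upward_normal : Prop :=
  forall i z, cdom A i z -> 0 < n3 (unit_normal i z).

(* normal Gauss map: stereographic projection of f^{-1} N from the south pole *)
Definition stereo (n : Nil3) : C := (n1 n / (1 + n3 n), n2 n / (1 + n3 n)).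
Definition is_normal_gauss_map (g : X -> C) : Prop :=
  forall i z, cdom A i z -> g (cpar A i z) = stereo (unit_normal i z).

End Surf.

Definition eitheta (theta : R) : C := (cos theta, sin theta).

(* Main.v *)
Require Import Defs.
From Stdlib Require Import Reals Lra Nsatz List Classical.
From Coquelicot Require Import Coquelicot.
Open Scope R_scope.

Ltac fixd := repeat match goal with |- context [Derive ?h ?t] =>
  match goal with H : is_derive _ _ _ |- _ =>
    let E := fresh in assert (E : Derive h t = _) by (apply is_derive_unique; exact H);
    rewrite E; clear E end end.
Ltac exd := repeat split; try (eexists; eassumption).

Lemma nil3_eq (u v : Nil3) : n1 u = n1 v -> n2 u = n2 v -> n3 u = n3 v -> u = v.
Proof. destruct u as [[u1 u2] u3], v as [[v1 v2] v3]; unfold n1,n2,n3; simpl; intros; subst; reflexivity. Qed.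

Definition is_derive3 (F : R -> Nil3) (t0 : R) (d : Nil3) : Prop :=
  is_derive (fun t => n1 (F t)) t0 (n1 d) /\ is_derive (fun t => n2 (F t)) t0 (n2 d) /\
  is_derive (fun t => n3 (F t)) t0 (n3 d).

Definition vadd (u v : Nil3) : Nil3 := (n1 u + n1 v, n2 u + n2 v, n3 u + n3 v).
Definition vsc (k : R) (u : Nil3) : Nil3 := (k * n1 u, k * n2 u, k * n3 u).

Lemma g_lc3 (p1 p2 v1 v2 v3 : R -> R) t0 dp1 dp2 dv1 dv2 dv3 :
  is_derive p1 t0 dp1 -> is_derive p2 t0 dp2 -> is_derive v1 t0 dv1 -> is_derive v2 t0 dv2 ->
  is_derive v3 t0 dv3 ->
  is_derive (fun t => v3 t + / 2 * (p2 t * v1 t - p1 t * v2 t)) t0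
   (dv3 + / 2 * (dp2 * v1 t0 + p2 t0 * dv1 - dp1 * v2 t0 - p1 t0 * dv2)).
Proof. intros. auto_derive; [exd | fixd; ring]. Qed.

Lemma g_cr (p q r s : R -> R) t0 dp dq dr ds :
  is_derive p t0 dp -> is_derive q t0 dq -> is_derive r t0 dr -> is_derive s t0 ds ->
  is_derive (fun t => p t * q t - r t * s t) t0 (dp * q t0 + p t0 * dq - (dr * s t0 + r t0 * ds)).
Proof. intros. auto_derive; [exd | fixd; ring]. Qed.

Lemma g_dot (p1 p2 p3 q1 q2 q3 : R -> R) t0 dp1 dp2 dp3 dq1 dq2 dq3 :
  is_derive p1 t0 dp1 -> is_derive p2 t0 dp2 -> is_derive p3 t0 dp3 ->
  is_derive q1 t0 dq1 -> is_derive q2 t0 dq2 -> is_derive q3 t0 dq3 ->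
  is_derive (fun t => p1 t * q1 t + p2 t * q2 t + p3 t * q3 t) t0
   (dp1 * q1 t0 + dp2 * q2 t0 + dp3 * q3 t0 + (p1 t0 * dq1 + p2 t0 * dq2 + p3 t0 * dq3)).
Proof. intros. auto_derive; [exd | fixd; ring]. Qed.

Lemma g_nrm (p q1 q2 q3 : R -> R) t0 dp dq1 dq2 dq3 :
  is_derive p t0 dp -> is_derive q1 t0 dq1 -> is_derive q2 t0 dq2 -> is_derive q3 t0 dq3 ->
  0 < q1 t0 * q1 t0 + q2 t0 * q2 t0 + q3 t0 * q3 t0 ->
  is_derive (fun t => p t / sqrt (q1 t * q1 t + q2 t * q2 t + q3 t * q3 t)) t0
   (dp / sqrt (q1 t0 * q1 t0 + q2 t0 * q2 t0 + q3 t0 * q3 t0) -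
    p t0 * ((q1 t0 * dq1 + q2 t0 * dq2 + q3 t0 * dq3) /
     (sqrt (q1 t0 * q1 t0 + q2 t0 * q2 t0 + q3 t0 * q3 t0) *
      sqrt (q1 t0 * q1 t0 + q2 t0 * q2 t0 + q3 t0 * q3 t0) *
      sqrt (q1 t0 * q1 t0 + q2 t0 * q2 t0 + q3 t0 * q3 t0)))).
Proof.
  intros Hp Hq1 Hq2 Hq3 Hpos. assert (Hs := sqrt_lt_R0 _ Hpos).
  auto_derive; [exd; lra | fixd].
  assert (E := sqrt_sqrt (q1 t0 * q1 t0 + q2 t0 * q2 t0 + q3 t0 * q3 t0) ltac:(lra)).
  field_simplify; try lra. rewrite ?E. field. lra.
Qed.

Definition lc_d (P V dP dV : Nil3) : Nil3 :=
  (n1 dV, n2 dV, n3 dV + / 2 * (n2 dP * n1 V + n2 P * n1 dV - n1 dP * n2 V - n1 P * n2 dV)).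
Definition cross_d (u v du dv : Nil3) : Nil3 := vadd (cross3 du v) (cross3 u dv).

Lemma d_left_comp P V t0 dP dV : is_derive3 P t0 dP -> is_derive3 V t0 dV ->
  is_derive3 (fun t => left_comp (P t) (V t)) t0 (lc_d (P t0) (V t0) dP dV).
Proof.
  intros (H1&H2&H3) (K1&K2&K3). split; [|split]; [exact K1 | exact K2 |].
  exact (g_lc3 _ _ _ _ _ _ _ _ _ _ _ H1 H2 K1 K2 K3).
Qed.

Lemma is_derive_eqv (f : R -> R) (x l l' : R) : is_derive f x l -> l = l' -> is_derive f x l'.
Proof. intros H E; subst; exact H. Qed.

Lemma d_cross u v t0 du dv : is_derive3 u t0 du -> is_derive3 v t0 dv ->
  is_derive3 (fun t => cross3 (u t) (v t)) t0 (cross_d (u t0) (v t0) du dv).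
Proof.
  intros (H1&H2&H3) (K1&K2&K3).
  split; [|split]; (eapply is_derive_eqv; [eapply g_cr; eassumption | unfold cross_d, vadd, cross3, n1, n2, n3; simpl; ring]).
Qed.

Lemma d_dot u v t0 du dv : is_derive3 u t0 du -> is_derive3 v t0 dv ->
  is_derive (fun t => dot3 (u t) (v t)) t0 (dot3 du (v t0) + dot3 (u t0) dv).
Proof.
  intros (H1&H2&H3) (K1&K2&K3).
  unfold dot3 at 1. eapply is_derive_eqv; [eapply g_dot; eassumption | unfold dot3; ring].
Qed.

Definition nrm (c : Nil3) : Nil3 :=
  let r := sqrt (dot3 c c) in (n1 c / r, n2 c / r, n3 c / r).

Lemma unit_normal_nrm X (A : atlas X) f i z :
  unit_normal A f i z = nrm (cross3 (Lx A f i z) (Ly A f i z)).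
Proof. reflexivity. Qed.

Definition nrm_d (c dc : Nil3) : Nil3 :=
  let r := sqrt (dot3 c c) in
  let k := dot3 c dc / (r * r * r) in
  (n1 dc / r - n1 c * k, n2 dc / r - n2 c * k, n3 dc / r - n3 c * k).

Lemma d_nrm c t0 dc : is_derive3 c t0 dc -> 0 < dot3 (c t0) (c t0) ->
  is_derive3 (fun t => nrm (c t)) t0 (nrm_d (c t0) dc).
Proof.
  intros (H1&H2&H3) Hp. unfold dot3 in Hp.
  split; [|split]; (eapply is_derive_eqv; [eapply g_nrm; eassumption | unfold nrm_d, dot3, n1, n2, n3; simpl; ring]).
Qed.

Definition kl_formula (N NX NY : Nil3) : Nil3 :=
  vsc (- / (n3 N * n3 N)) (vadd (cross3 N NX) NY).

Lemma sqrt_cc (A B : Nil3) : dot3 A A = dot3 B B -> dot3 A B = 0 -> 0 < dot3 A A ->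
  sqrt (dot3 (cross3 A B) (cross3 A B)) = dot3 A A.
Proof.
  intros H1 H2 H3.
  assert (L : dot3 (cross3 A B) (cross3 A B) = dot3 A A * dot3 B B - dot3 A B * dot3 A B)
    by (unfold dot3, cross3, n1, n2, n3; simpl; ring).
  rewrite L, H2, <- H1. replace (dot3 A A * dot3 A A - 0 * 0) with (dot3 A A * dot3 A A) by ring.
  apply sqrt_square. lra.
Qed.

Lemma KL_alg (A B AX AY BX BY : Nil3) :
  0 < dot3 A A -> dot3 A A = dot3 B B -> dot3 A B = 0 ->
  dot3 A AY = dot3 B BY ->
  BX = (n1 AY, n2 AY, n3 AY - n3 (cross3 A B)) ->
  dot3 (vadd (vadd AX BY) (vadd (nabla_sym A) (nabla_sym B))) (cross3 A B) = 0 ->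
  n3 (cross3 A B) <> 0 ->
  A = kl_formula (nrm (cross3 A B)) (nrm_d (cross3 A B) (cross_d A B AX BX))
                 (nrm_d (cross3 A B) (cross_d A B AY BY)).
Proof.
  intros He Hd2 Hd1 Hd3 HI Hm Hc3. subst BX.
  unfold kl_formula, nrm, nrm_d. cbv zeta. rewrite (sqrt_cc A B Hd2 Hd1 He).
  set (c := cross3 A B) in *.
  set (e := dot3 A A) in *.
  set (d1 := dot3 A B) in *.
  set (d2 := e - dot3 B B).
  set (d3 := dot3 A AY - dot3 B BY).
  set (dm := dot3 (vadd (vadd AX BY) (vadd (nabla_sym A) (nabla_sym B))) c) in *.
  set (W := dot3 A AY * d2 + e * d3 + d1 * (dot3 B AY + dot3 A BY)).
  set (Gv := vadd (vsc (n3 A * n3 B * d2 + (n3 B * n3 B - n3 A * n3 A) * d1 - dm) B)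
       (vadd (vsc d1 (vadd (cross3 AY A) (vsc (-1) (cross3 BY B))))
          (vadd (vsc d2 (cross3 A BY)) (vsc (- d3) c)))).
  set (Qv := vadd (vsc e Gv) (vsc W c)).
  assert (HQ : Qv = (0,0,0)).
  { assert (D2 : d2 = 0) by (unfold d2; lra). assert (D3 : d3 = 0) by (unfold d3; lra).
    unfold Qv, Gv, W. rewrite D2, D3, Hd1, Hm. unfold vadd, vsc, n1, n2, n3; simpl. f_equal; [f_equal|]; ring. }
  assert (Hc : n3 c = n1 A * n2 B - n2 A * n1 B) by reflexivity.
  assert (HE : e <> 0) by lra.
  apply nil3_eq;
  [ transitivity (n1 A - n1 Qv / (e * (n3 c * n3 c))); [rewrite HQ; unfold n1, Rdiv; simpl; rewrite Rmult_0_l; ring|]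
  | transitivity (n2 A - n2 Qv / (e * (n3 c * n3 c))); [rewrite HQ; unfold n2, Rdiv; simpl; rewrite Rmult_0_l; ring|]
  | transitivity (n3 A - n3 Qv / (e * (n3 c * n3 c))); [rewrite HQ; unfold n3, Rdiv; simpl; rewrite Rmult_0_l; ring|]];
  rewrite Hc in Hc3 |- *; unfold Qv, Gv, W, d1, d2, d3, dm, c, e;
    destruct A as [[a1 a2] a3], B as [[b1 b2] b3], AX as [[p1 p2] p3], AY as [[q1 q2] q3], BY as [[s1 s2] s3];
    cbv [dot3 cross3 cross_d vadd vsc nabla_sym n1 n2 n3 fst snd] in *;
    field; split; auto.
Qed.


Lemma R_deriv_of_bound (f : R -> R) x l : (forall eps : posreal, locally x (fun t => Rabs (f t - f x - (t - x) * l) <= eps * Rabs (t - x))) -> is_derive f x l.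
Proof. intros H. split. apply is_linear_scal_l. intros x' Hx'.
 apply (@is_filter_lim_locally_unique R_AbsRing R_NormedModule) in Hx'. subst x'. intro eps.
 apply filter_imp with (2 := H eps). intros t Ht. exact Ht.
Qed.
Lemma C_bound (h : C -> C) z l : is_derive (K := C_AbsRing) h z l ->
  forall eps : posreal, locally z (fun y => Cmod (Cminus (Cminus (h y) (h z)) (Cmult (Cminus y z) l)) <= eps * Cmod (Cminus y z)).
Proof. intros [_ H] eps. specialize (H z (fun P HP => HP) eps). exact H. Qed.
Lemma im_le_Cmod (c : C) : Rabs (Im c) <= Cmod c.
Proof. destruct c as [a b]. unfold Cmod, Im; simpl. rewrite <- sqrt_Rsqr_abs.
  apply sqrt_le_1_alt. unfold Rsqr. nra. Qed.

Lemma holo_partials (h : C -> C) z l : is_derive (K := C_AbsRing) h z l ->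
  is_derive (fun t => fst (h (t, snd z))) (fst z) (fst l) /\
  is_derive (fun t => snd (h (t, snd z))) (fst z) (snd l) /\
  is_derive (fun t => fst (h (fst z, t))) (snd z) (- snd l) /\
  is_derive (fun t => snd (h (fst z, t))) (snd z) (fst l).
Proof.
  intros H. destruct z as [z1 z2]. destruct l as [l1 l2]. simpl.
  assert (K : forall eps : posreal, locally_2d (fun u v =>
     Cmod (Cminus (Cminus (h (u,v)) (h (z1,z2))) (Cmult (Cminus (u,v) (z1,z2)) (l1,l2))) <= eps * Cmod (Cminus (u,v) (z1,z2))) z1 z2).
  { intro eps. destruct (C_bound _ _ _ H eps) as [d Hd].
    assert (Hd2 : 0 < d / 2) by (generalize (cond_pos d); lra).
    exists (mkposreal _ Hd2). intros u v Hu Hv. apply Hd. simpl in Hu, Hv.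
    change (Cmod (Cminus (u,v) (z1,z2)) < d).
    eapply Rle_lt_trans. apply Cmod_2Rmax. simpl.
    assert (Hs : sqrt 2 < 2). { rewrite <- (sqrt_square 2) at 2 by lra. apply sqrt_lt_1; lra. }
    assert (Hm : Rmax (Rabs (u + - z1)) (Rabs (v + - z2)) < d / 2) by (apply Rmax_lub_lt; assumption).
    assert (0 <= Rmax (Rabs (u + - z1)) (Rabs (v + - z2))) by (eapply Rle_trans; [apply Rabs_pos| apply Rmax_l]).
    assert (0 <= sqrt 2) by apply sqrt_pos. nra. }
  assert (E1 : forall t, Cmod (Cminus (t,z2) (z1,z2)) = Rabs (t - z1)).
  { intro t. unfold Cminus, Cplus, Copp; simpl. replace (z2 + - z2) with 0 by ring. apply Cmod_R. }
  assert (E2 : forall t, Cmod (Cminus (z1,t) (z1,z2)) = Rabs (t - z2)).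
  { intro t. unfold Cminus, Cplus, Copp; simpl. replace (z1 + - z1) with 0 by ring.
    unfold Cmod; simpl. rewrite <- sqrt_Rsqr_abs. f_equal. unfold Rsqr. ring. }
  split; [|split; [|split]]; apply R_deriv_of_bound; intro eps;
  (eapply filter_imp; [| first [apply (locally_2d_1d_const_y _ _ _ (K eps)) | apply (locally_2d_1d_const_x _ _ _ (K eps))]]);
  intros t Ht; simpl in Ht; rewrite ?E1, ?E2 in Ht; (eapply Rle_trans; [|exact Ht]).
  - eapply Rle_trans; [|apply re_le_Cmod]; right; f_equal; unfold Re, Cminus, Cplus, Copp, Cmult; simpl; ring.
  - eapply Rle_trans; [|apply im_le_Cmod]; right; f_equal; unfold Im, Cminus, Cplus, Copp, Cmult; simpl; ring.
  - eapply Rle_trans; [|apply re_le_Cmod]; right; f_equal; unfold Re, Cminus, Cplus, Copp, Cmult; simpl; ring.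
  - eapply Rle_trans; [|apply im_le_Cmod]; right; f_equal; unfold Im, Cminus, Cplus, Copp, Cmult; simpl; ring.
Qed.

Lemma cont_2d (u : C -> R) (z : C) : continuous u z -> continuity_2d_pt (fun a b => u (a,b)) (fst z) (snd z).
Proof.
  intros H. destruct z as [x y]. apply continuity_2d_pt_filterlim. simpl.
  eapply filterlim_ext; [| exact H]. intros [a b]; reflexivity.
Qed.

Lemma open_loc2d (D : C -> Prop) z : open D -> D z -> locally_2d (fun a b => D (a,b)) (fst z) (snd z).
Proof.
  intros HO Hz. destruct z as [x y]. apply locally_2d_locally. simpl.
  generalize (HO _ Hz). apply filter_imp. intros [a b]; auto.
Qed.

Lemma smooth_exdiff (D : C -> Prop) u : open D -> smooth_on D u ->
  forall n l z, D z -> ex_diff_n (fun a b => pder l u (a,b)) n (fst z) (snd z).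
Proof.
  intros HO Hs n. induction n as [|n IH]; intros l z Hz; simpl.
  - split; [apply cont_2d; apply (Hs l z Hz) | exact I].
  - destruct (Hs l z Hz) as (H1 & H2 & H3).
    split; [apply cont_2d; exact H3|].
    split; [destruct z; exact H1|]. split; [destruct z; exact H2|].
    split; [exact (IH (cons Px l) z Hz) | exact (IH (cons Py l) z Hz)].
Qed.

Lemma smooth_dpl (D : C -> Prop) u : open D -> smooth_on D u ->
  forall l z, D z -> differentiable_pt_lim (fun a b => pder l u (a,b)) (fst z) (snd z)
     (pder (cons Px l) u z) (pder (cons Py l) u z).
Proof.
  intros HO Hs l z Hz.
  assert (HL : locally_2d (fun a b => ex_diff_n (fun a b => pder l u (a,b)) 2 a b) (fst z) (snd z)).
  { generalize (open_loc2d D z HO Hz). apply locally_2d_impl. apply locally_2d_forall.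
    intros a b Hab. exact (smooth_exdiff D u HO Hs 2 l (a,b) Hab). }
  destruct (Taylor_Lagrange_2d _ 1 _ _ HL) as [K HK].
  unfold DL_pol, differential in HK. simpl in HK.
  assert (C00 : Binomial.C 0 0 = 1) by (unfold Binomial.C; simpl; field).
  assert (C10 : Binomial.C 1 0 = 1) by (unfold Binomial.C; simpl; field).
  assert (C11 : Binomial.C 1 1 = 1) by (unfold Binomial.C; simpl; field).
  rewrite C00, C10, C11 in HK.
  change (partial_derive 0 0 (fun a b : R => pder l u (a, b)) (fst z) (snd z)) with (pder l u (fst z, snd z)) in HK.
  change (partial_derive 0 1 (fun a b : R => pder l u (a, b)) (fst z) (snd z)) with (pder (cons Py l) u z) in HK.
  change (partial_derive 1 0 (fun a b : R => pder l u (a, b)) (fst z) (snd z)) with (pder (cons Px l) u z) in HK.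
  intros eps. destruct HK as [d1 Hd1].
  assert (Hk : 0 < eps / (Rabs K + 1)) by (apply Rdiv_lt_0_compat; [apply cond_pos | generalize (Rabs_pos K); lra]).
  exists (mkposreal _ (Rmin_stable_in_posreal d1 (mkposreal _ Hk))).
  intros a b Ha Hb. simpl in Ha, Hb.
  assert (Ha1 : Rabs (a - fst z) < d1) by (eapply Rlt_le_trans; [exact Ha| apply Rmin_l]).
  assert (Hb1 : Rabs (b - snd z) < d1) by (eapply Rlt_le_trans; [exact Hb| apply Rmin_l]).
  assert (Ha2 : Rabs (a - fst z) < eps / (Rabs K + 1)) by (eapply Rlt_le_trans; [exact Ha| apply Rmin_r]).
  assert (Hb2 : Rabs (b - snd z) < eps / (Rabs K + 1)) by (eapply Rlt_le_trans; [exact Hb| apply Rmin_r]).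
  specialize (Hd1 a b Ha1 Hb1). simpl in Hd1.
  set (M := Rmax (Rabs (a - fst z)) (Rabs (b - snd z))) in *.
  assert (HM0 : 0 <= M) by (eapply Rle_trans; [apply Rabs_pos| apply Rmax_l]).
  assert (HM : M < eps / (Rabs K + 1)) by (apply Rmax_lub_lt; assumption).
  assert (HM' : M * (Rabs K + 1) <= eps).
  { apply Rmult_lt_compat_r with (r := Rabs K + 1) in HM; [|generalize (Rabs_pos K); lra].
    unfold Rdiv in HM. rewrite Rmult_assoc, Rinv_l in HM by (generalize (Rabs_pos K); lra). lra. }
  destruct z as [x y]; simpl in *.
  match goal with |- Rabs ?g <= _ => match type of Hd1 with Rabs ?g' <= _ =>
    replace g with g' by field end end.
  eapply Rle_trans; [exact Hd1|].
  replace (K * (M * (M * 1))) with (K * M * M) by ring.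
  assert (K * M * M <= Rabs K * M * M).
  { apply Rmult_le_compat_r; [exact HM0|]. apply Rmult_le_compat_r; [exact HM0|]. apply Rle_abs. }
  assert (Rabs K * M * M <= (Rabs K + 1) * M * M) by (generalize (Rabs_pos K); nra).
  nra.
Qed.

Lemma smooth_schwarz (D : C -> Prop) u : open D -> smooth_on D u ->
  forall l z, D z -> pder (cons Px (cons Py l)) u z = pder (cons Py (cons Px l)) u z.
Proof.
  intros HO Hs l z Hz. destruct z as [x y].
  assert (S := Schwarz (fun a b => pder l u (a,b)) x y).
  simpl in S |- *. apply S.
  - generalize (open_loc2d D (x,y) HO Hz). apply locally_2d_impl. apply locally_2d_forall.
    intros a b Hab.
    destruct (Hs l (a,b) Hab) as (E1 & E2 & _).
    destruct (Hs (cons Py l) (a,b) Hab) as (F1 & _ & _).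
    destruct (Hs (cons Px l) (a,b) Hab) as (_ & G2 & _).
    repeat split; assumption.
  - apply (cont_2d (pder (cons Px (cons Py l)) u) (x,y)). apply (Hs _ _ Hz).
  - apply (cont_2d (pder (cons Py (cons Px l)) u) (x,y)). apply (Hs _ _ Hz).
Qed.

Lemma is_derive3_eqv F t0 d d' : is_derive3 F t0 d -> d = d' -> is_derive3 F t0 d'.
Proof. intros H E; subst; exact H. Qed.


Lemma cross_d_lin A B a b X1 X2 Y1 Y2 :
  cross_d A B (vadd (vsc a X1) (vsc b X2)) (vadd (vsc a Y1) (vsc b Y2)) =
  vadd (vsc a (cross_d A B X1 Y1)) (vsc b (cross_d A B X2 Y2)).
Proof. apply nil3_eq; unfold cross_d, vadd, vsc, cross3, n1, n2, n3; simpl; ring. Qed.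

Lemma nrm_d_lin c a b u v :
  nrm_d c (vadd (vsc a u) (vsc b v)) = vadd (vsc a (nrm_d c u)) (vsc b (nrm_d c v)).
Proof. apply nil3_eq; unfold nrm_d, vadd, vsc, dot3, n1, n2, n3; cbv zeta; simpl; unfold Rdiv; ring. Qed.

Section Chart.
Variable X : Type.
Variable A : atlas X.
Variable f : X -> Nil3.
Hypothesis Hop : forall i, open (cdom A i).
Hypothesis Hsm : smooth_map A f.

Definition good_curve (i : chart A) (phi : R -> C) (t0 a b : R) : Prop :=
  forall k l, is_derive (fun t => pder l (floc A f i k) (phi t)) t0
    (a * pder (Px :: l) (floc A f i k) (phi t0) + b * pder (Py :: l) (floc A f i k) (phi t0)).

Definition jet (l : list pdir) (i : chart A) (w : C) : Nil3 :=
  (pder l (floc A f i 0) w, pder l (floc A f i 1) w, pder l (floc A f i 2) w).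

Lemma gc_x i z : cdom A i z -> good_curve i (fun t => (t, snd z)) (fst z) 1 0.
Proof.
  intros Hz k l. destruct (Hsm i k l z Hz) as (H1 & _ & _).
  destruct H1 as [d Hd]. destruct z as [x y]; simpl in *.
  eapply is_derive_eqv; [exact Hd|].
  rewrite ?Rmult_1_l, ?Rmult_0_l, ?Rplus_0_r, ?Rplus_0_l. symmetry. apply is_derive_unique; exact Hd.
Qed.

Lemma gc_y i z : cdom A i z -> good_curve i (fun t => (fst z, t)) (snd z) 0 1.
Proof.
  intros Hz k l. destruct (Hsm i k l z Hz) as (_ & H1 & _).
  destruct H1 as [d Hd]. destruct z as [x y]; simpl in *.
  eapply is_derive_eqv; [exact Hd|].
  rewrite ?Rmult_1_l, ?Rmult_0_l, ?Rplus_0_r, ?Rplus_0_l. symmetry. apply is_derive_unique; exact Hd.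
Qed.

Lemma gc_comp j (g1 g2 : R -> R) t0 a b :
  is_derive g1 t0 a -> is_derive g2 t0 b -> cdom A j (g1 t0, g2 t0) ->
  good_curve j (fun t => (g1 t, g2 t)) t0 a b.
Proof.
  intros H1 H2 Hw k l.
  assert (D := smooth_dpl _ _ (Hop j) (Hsm j k) l _ Hw). simpl in D.
  apply is_derive_Reals in H1. apply is_derive_Reals in H2.
  assert (E := derivable_pt_lim_comp_2d _ _ _ _ _ _ _ _ D H1 H2).
  apply is_derive_Reals in E. eapply is_derive_eqv; [exact E| simpl; ring].
Qed.

Lemma gc_hx j (h : C -> C) z a b : is_derive (K := C_AbsRing) h z (a, b) -> cdom A j (h z) ->
  good_curve j (fun t => h (t, snd z)) (fst z) a b.
Proof.
  intros H Hw. destruct (holo_partials h z (a,b) H) as (H1 & H2 & _ & _). simpl in H1, H2.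
  intros k l. assert (G := gc_comp j _ _ _ _ _ H1 H2).
  destruct z as [x y]. simpl in *. rewrite <- surjective_pairing in G. specialize (G Hw k l).
  eapply is_derive_ext; [|exact G]. intro t. simpl. rewrite <- surjective_pairing. reflexivity.
Qed.

Lemma gc_hy j (h : C -> C) z a b : is_derive (K := C_AbsRing) h z (a, b) -> cdom A j (h z) ->
  good_curve j (fun t => h (fst z, t)) (snd z) (- b) a.
Proof.
  intros H Hw. destruct (holo_partials h z (a,b) H) as (_ & _ & H1 & H2). simpl in H1, H2.
  intros k l. assert (G := gc_comp j _ _ _ _ _ H1 H2).
  destruct z as [x y]. simpl in *. rewrite <- surjective_pairing in G. specialize (G Hw k l).
  eapply is_derive_ext; [|exact G]. intro t. simpl. rewrite <- surjective_pairing. reflexivity.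
Qed.

Lemma gc_jet i phi t0 a b l : good_curve i phi t0 a b ->
  is_derive3 (fun t => jet l i (phi t)) t0
    (vadd (vsc a (jet (Px :: l) i (phi t0))) (vsc b (jet (Py :: l) i (phi t0)))).
Proof. intros H. split; [|split]; apply H. Qed.

Lemma jet_F i w : jet nil i w = f (cpar A i w).
Proof. unfold jet; simpl. unfold floc. destruct (f (cpar A i w)) as [[x y] z]; reflexivity. Qed.
Lemma jet_Fx i w : jet (Px :: nil) i w = Fx A f i w.
Proof. reflexivity. Qed.
Lemma jet_Fy i w : jet (Py :: nil) i w = Fy A f i w.
Proof. reflexivity. Qed.

Ltac veq := apply nil3_eq; unfold vadd, vsc, lc_d, cross_d, cross3, nrm_d, dot3, jet, Lx, Ly, Fx, Fy, left_comp, n1, n2, n3; simpl; try ring; try field.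

Definition AXv i w := lc_d (jet nil i w) (jet (Px :: nil) i w) (jet (Px :: nil) i w) (jet (Px :: Px :: nil) i w).
Definition AYv i w := lc_d (jet nil i w) (jet (Px :: nil) i w) (jet (Py :: nil) i w) (jet (Py :: Px :: nil) i w).
Definition BXv i w := lc_d (jet nil i w) (jet (Py :: nil) i w) (jet (Px :: nil) i w) (jet (Px :: Py :: nil) i w).
Definition BYv i w := lc_d (jet nil i w) (jet (Py :: nil) i w) (jet (Py :: nil) i w) (jet (Py :: Py :: nil) i w).

Lemma gc_Lx i phi t0 a b : good_curve i phi t0 a b ->
  is_derive3 (fun t => Lx A f i (phi t)) t0 (vadd (vsc a (AXv i (phi t0))) (vsc b (AYv i (phi t0)))).
Proof.
  intros H. assert (D := d_left_comp _ _ _ _ _ (gc_jet i phi t0 a b nil H) (gc_jet i phi t0 a b (Px :: nil) H)).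
  eapply is_derive3_eqv; [exact D|]. unfold AXv, AYv. veq.
Qed.

Lemma gc_Ly i phi t0 a b : good_curve i phi t0 a b ->
  is_derive3 (fun t => Ly A f i (phi t)) t0 (vadd (vsc a (BXv i (phi t0))) (vsc b (BYv i (phi t0)))).
Proof.
  intros H. assert (D := d_left_comp _ _ _ _ _ (gc_jet i phi t0 a b nil H) (gc_jet i phi t0 a b (Py :: nil) H)).
  eapply is_derive3_eqv; [exact D|]. unfold BXv, BYv. veq.
Qed.

Definition NXv i w := nrm_d (cross3 (Lx A f i w) (Ly A f i w)) (cross_d (Lx A f i w) (Ly A f i w) (AXv i w) (BXv i w)).
Definition NYv i w := nrm_d (cross3 (Lx A f i w) (Ly A f i w)) (cross_d (Lx A f i w) (Ly A f i w) (AYv i w) (BYv i w)).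

Lemma gc_N i phi t0 a b : good_curve i phi t0 a b ->
  0 < dot3 (cross3 (Lx A f i (phi t0)) (Ly A f i (phi t0))) (cross3 (Lx A f i (phi t0)) (Ly A f i (phi t0))) ->
  is_derive3 (fun t => unit_normal A f i (phi t)) t0 (vadd (vsc a (NXv i (phi t0))) (vsc b (NYv i (phi t0)))).
Proof.
  intros H Hp. assert (D := d_nrm _ _ _ (d_cross _ _ _ _ _ (gc_Lx i phi t0 a b H) (gc_Ly i phi t0 a b H)) Hp).
  cbv beta in D. rewrite cross_d_lin, nrm_d_lin in D. exact D.
Qed.

Lemma gc_F i phi t0 a b : good_curve i phi t0 a b ->
  is_derive3 (fun t => f (cpar A i (phi t))) t0 (vadd (vsc a (Fx A f i (phi t0))) (vsc b (Fy A f i (phi t0)))).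
Proof.
  intros H. exact (gc_jet i phi t0 a b nil H).
Qed.

Lemma v10 u v : vadd (vsc 1 u) (vsc 0 v) = u.
Proof. apply nil3_eq; unfold vadd, vsc, n1, n2, n3; simpl; ring. Qed.
Lemma v01 u v : vadd (vsc 0 u) (vsc 1 v) = v.
Proof. apply nil3_eq; unfold vadd, vsc, n1, n2, n3; simpl; ring. Qed.

Lemma ax_Lx i z : cdom A i z -> is_derive3 (fun t => Lx A f i (t, snd z)) (fst z) (AXv i z).
Proof. intros Hz. assert (D := gc_Lx _ _ _ _ _ (gc_x i z Hz)). rewrite v10 in D. destruct z; exact D. Qed.
Lemma ay_Lx i z : cdom A i z -> is_derive3 (fun t => Lx A f i (fst z, t)) (snd z) (AYv i z).
Proof. intros Hz. assert (D := gc_Lx _ _ _ _ _ (gc_y i z Hz)). rewrite v01 in D. destruct z; exact D. Qed.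
Lemma ax_Ly i z : cdom A i z -> is_derive3 (fun t => Ly A f i (t, snd z)) (fst z) (BXv i z).
Proof. intros Hz. assert (D := gc_Ly _ _ _ _ _ (gc_x i z Hz)). rewrite v10 in D. destruct z; exact D. Qed.
Lemma ay_Ly i z : cdom A i z -> is_derive3 (fun t => Ly A f i (fst z, t)) (snd z) (BYv i z).
Proof. intros Hz. assert (D := gc_Ly _ _ _ _ _ (gc_y i z Hz)). rewrite v01 in D. destruct z; exact D. Qed.

Lemma locally_x_open i z : cdom A i z -> locally (fst z) (fun t => cdom A i (t, snd z)).
Proof. intros Hz. apply (locally_2d_1d_const_y (fun a b => cdom A i (a,b))). apply open_loc2d; auto. Qed.
Lemma locally_y_open i z : cdom A i z -> locally (snd z) (fun t => cdom A i (fst z, t)).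
Proof. intros Hz. apply (locally_2d_1d_const_x (fun a b => cdom A i (a,b))). apply open_loc2d; auto. Qed.

Lemma deriv_zero_loc (g : R -> R) (P : R -> Prop) t0 l : locally t0 P -> (forall t, P t -> g t = 0) ->
  is_derive g t0 l -> l = 0.
Proof.
  intros HP Hg Hd. assert (H0 : is_derive g t0 0).
  { apply (is_derive_ext_loc (fun _ => 0)). apply filter_imp with (2 := HP). intros t Ht. symmetry. auto.
    apply (is_derive_const (K := R_AbsRing) (V := R_NormedModule) 0). }
  rewrite <- (is_derive_unique _ _ _ Hd). apply is_derive_unique. exact H0.
Qed.

Lemma is_derive_sub (g1 g2 : R -> R) t0 a b : is_derive g1 t0 a -> is_derive g2 t0 b ->
  is_derive (fun t => g1 t - g2 t) t0 (a - b).
Proof. intros. auto_derive; [exd | fixd; ring]. Qed.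

Hypothesis Hconf : conformal_immersion A f.
Hypothesis Hmin : minimal A f.
Hypothesis Hnv : nowhere_vertical A f.

Lemma conf_at i z : cdom A i z -> dot3 (Lx A f i z) (Lx A f i z) = dot3 (Ly A f i z) (Ly A f i z) /\
    0 < dot3 (Lx A f i z) (Lx A f i z) /\ dot3 (Lx A f i z) (Ly A f i z) = 0.
Proof. intros Hz. exact (proj2 Hconf i z Hz). Qed.

Lemma cc_pos i z : cdom A i z -> 0 < dot3 (cross3 (Lx A f i z) (Ly A f i z)) (cross3 (Lx A f i z) (Ly A f i z)).
Proof.
  intros Hz. destruct (conf_at i z Hz) as (H1 & H2 & H3).
  assert (E := sqrt_cc _ _ H1 H3 H2).
  assert (L : dot3 (cross3 (Lx A f i z) (Ly A f i z)) (cross3 (Lx A f i z) (Ly A f i z)) =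
     dot3 (Lx A f i z) (Lx A f i z) * dot3 (Ly A f i z) (Ly A f i z) - dot3 (Lx A f i z) (Ly A f i z) * dot3 (Lx A f i z) (Ly A f i z))
    by (unfold dot3, cross3, n1, n2, n3; simpl; ring).
  rewrite L, H3, <- H1. nra.
Qed.

Lemma C2_at i z : cdom A i z -> dot3 (Lx A f i z) (AYv i z) = dot3 (Ly A f i z) (BYv i z).
Proof.
  intros Hz.
  assert (D := is_derive_sub _ _ _ _ _ (d_dot _ _ _ _ _ (ay_Lx i z Hz) (ay_Lx i z Hz))
                                      (d_dot _ _ _ _ _ (ay_Ly i z Hz) (ay_Ly i z Hz))).
  assert (E := deriv_zero_loc (fun t => dot3 (Lx A f i (fst z, t)) (Lx A f i (fst z, t)) -
       dot3 (Ly A f i (fst z, t)) (Ly A f i (fst z, t))) _ _ _ (locally_y_open i z Hz)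
     (fun t Ht => ltac:(cbv beta; rewrite (proj1 (conf_at i (fst z, t) Ht)); ring)) D).
  destruct z as [x y]. simpl in E. unfold dot3 in E |- *. lra.
Qed.


Lemma schwarz_jet i z : cdom A i z -> jet (Px :: Py :: nil) i z = jet (Py :: Px :: nil) i z.
Proof.
  intros Hz. unfold jet.
  rewrite (smooth_schwarz _ _ (Hop i) (Hsm i 0%nat) nil z Hz), (smooth_schwarz _ _ (Hop i) (Hsm i 1%nat) nil z Hz),
          (smooth_schwarz _ _ (Hop i) (Hsm i 2%nat) nil z Hz). reflexivity.
Qed.

Lemma BX_AY i z : cdom A i z ->
  BXv i z = (n1 (AYv i z), n2 (AYv i z), n3 (AYv i z) - n3 (cross3 (Lx A f i z) (Ly A f i z))).
Proof.
  intros Hz. unfold BXv. rewrite (schwarz_jet i z Hz). unfold AYv.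
  apply nil3_eq; unfold lc_d, cross3, Lx, Ly, left_comp, Fx, Fy, jet; simpl; unfold n1, n2, n3; simpl; field.
Qed.

Lemma dx_eq (g : C -> R) z l : is_derive (fun t => g (t, snd z)) (fst z) l -> dx g z = l.
Proof. intros H. apply is_derive_unique. exact H. Qed.
Lemma dy_eq (g : C -> R) z l : is_derive (fun t => g (fst z, t)) (snd z) l -> dy g z = l.
Proof. intros H. apply is_derive_unique. exact H. Qed.

Lemma tension_eq i z : cdom A i z ->
  tension A f i z = vadd (vadd (AXv i z) (BYv i z)) (vadd (nabla_sym (Lx A f i z)) (nabla_sym (Ly A f i z))).
Proof.
  intros Hz. destruct (ax_Lx i z Hz) as (X1 & X2 & X3). destruct (ay_Ly i z Hz) as (Y1 & Y2 & Y3).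
  unfold tension. cbv beta zeta iota.
  rewrite (dx_eq (fun w => n1 (Lx A f i w)) _ _ X1), (dx_eq (fun w => n2 (Lx A f i w)) _ _ X2),
    (dx_eq (fun w => n3 (Lx A f i w)) _ _ X3), (dy_eq (fun w => n1 (Ly A f i w)) _ _ Y1),
    (dy_eq (fun w => n2 (Ly A f i w)) _ _ Y2), (dy_eq (fun w => n3 (Ly A f i w)) _ _ Y3).
  apply nil3_eq; unfold vadd, n1, n2, n3; simpl; ring.
Qed.

Lemma KL_chart i z : cdom A i z -> Lx A f i z = kl_formula (unit_normal A f i z) (NXv i z) (NYv i z).
Proof.
  intros Hz. destruct (conf_at i z Hz) as (H1 & H2 & H3).
  assert (Hp := cc_pos i z Hz).
  assert (Hr : 0 < sqrt (dot3 (cross3 (Lx A f i z) (Ly A f i z)) (cross3 (Lx A f i z) (Ly A f i z)))) by (apply sqrt_lt_R0; exact Hp).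
  apply KL_alg; auto.
  - apply C2_at; auto.
  - apply BX_AY; auto.
  - assert (M := Hmin i z Hz). rewrite tension_eq in M by auto. rewrite unit_normal_nrm in M.
    revert M Hr. unfold nrm. cbv zeta.
    generalize (sqrt (dot3 (cross3 (Lx A f i z) (Ly A f i z)) (cross3 (Lx A f i z) (Ly A f i z)))).
    intros r M Hr. unfold dot3 in M |- *. cbn [n1 n2 n3 fst snd] in M.
    apply (Rmult_eq_reg_r (/ r)); [| apply Rinv_neq_0_compat; lra]. rewrite Rmult_0_l, <- M. unfold Rdiv. ring.
  - assert (V := Hnv i z Hz). rewrite unit_normal_nrm in V. unfold nrm in V. cbv zeta in V.
    cbn [n3 snd] in V. intro E. apply V. rewrite E. unfold Rdiv. ring.
Qed.

End Chart.

Ltac dd := repeat match goal with v : Nil3 |- _ => let a := fresh "a" in let b := fresh "b" in let c := fresh "c" in destruct v as [[a b] c] end.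

Lemma sc1 th : sin th * sin th + cos th * cos th = 1.
Proof. assert (E := sin2_cos2 th). unfold Rsqr in E. exact E. Qed.

Ltac rotsolve th := apply nil3_eq;
  unfold iso_act, nil_mul, left_comp, vadd, vsc, cross3, dot3, fiber_rot, n1, n2, n3; simpl;
  generalize (sc1 th); generalize (sin th) (cos th); intros; nsatz.

Lemma rot_cross th u v : cross3 (fiber_rot th u) (fiber_rot th v) = fiber_rot th (cross3 u v).
Proof. dd. rotsolve th. Qed.

Lemma rot_dot th u v : dot3 (fiber_rot th u) (fiber_rot th v) = dot3 u v.
Proof.
  dd. unfold dot3, fiber_rot, n1, n2, n3; simpl.
  generalize (sc1 th); generalize (sin th) (cos th); intros; nsatz.
Qed.

Ltac rs th := apply nil3_eq; unfold iso_act, nil_mul, left_comp, vadd, vsc, cross3, dot3, fiber_rot, n1, n2, n3; cbn [fst snd];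
  generalize (sc1 th); generalize (sin th) (cos th); generalize (/ 2); intros; nsatz.

Lemma lc_rot th F V : left_comp (fiber_rot th F) (fiber_rot th V) = fiber_rot th (left_comp F V).
Proof. dd. rs th. Qed.

Definition diso (p : Nil3) (th : R) (d : Nil3) : Nil3 :=
  (cos th * n1 d - sin th * n2 d, sin th * n1 d + cos th * n2 d,
   n3 d + / 2 * (n1 p * (sin th * n1 d + cos th * n2 d) - n2 p * (cos th * n1 d - sin th * n2 d))).

Lemma lc_iso p th F V : left_comp (iso_act p th F) (diso p th V) = fiber_rot th (left_comp F V).
Proof. dd. unfold diso. rs th. Qed.

Lemma nrm_rot th c : nrm (fiber_rot th c) = fiber_rot th (nrm c).
Proof.
  unfold nrm. cbv zeta. rewrite rot_dot. generalize (sqrt (dot3 c c)). intro r.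
  dd. apply nil3_eq; unfold fiber_rot, n1, n2, n3; cbn [fst snd]; unfold Rdiv; ring.
Qed.

Lemma nrm_scale k c : 0 < k -> 0 < dot3 c c -> nrm (vsc k c) = nrm c.
Proof.
  intros Hk Hc. unfold nrm. cbv zeta.
  assert (E : dot3 (vsc k c) (vsc k c) = (k * k) * dot3 c c) by (dd; unfold dot3, vsc, n1, n2, n3; simpl; ring).
  rewrite E, sqrt_mult_alt, sqrt_square by nra.
  assert (0 < sqrt (dot3 c c)) by (apply sqrt_lt_R0; auto).
  revert H. generalize (sqrt (dot3 c c)). intros r Hr.
  dd. apply nil3_eq; unfold vsc, n1, n2, n3; cbn [fst snd]; field; lra.
Qed.

Lemma nrm_unit c : 0 < dot3 c c -> dot3 (nrm c) (nrm c) = 1.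
Proof.
  intros Hc. unfold nrm. cbv zeta. assert (E := sqrt_sqrt _ (Rlt_le _ _ Hc)).
  assert (Hr : 0 < sqrt (dot3 c c)) by (apply sqrt_lt_R0; auto).
  set (r := sqrt (dot3 c c)) in *.
  transitivity (dot3 c c / (r * r)).
  - unfold dot3 at 1. cbn [n1 n2 n3 fst snd]. unfold dot3. field. lra.
  - rewrite E. field. lra.
Qed.

Lemma nrm_perp c dc : 0 < dot3 c c -> dot3 (nrm c) (nrm_d c dc) = 0.
Proof.
  intros Hc. unfold nrm, nrm_d. cbv zeta. assert (E := sqrt_sqrt _ (Rlt_le _ _ Hc)).
  assert (Hr : 0 < sqrt (dot3 c c)) by (apply sqrt_lt_R0; auto).
  set (r := sqrt (dot3 c c)) in *.
  transitivity (dot3 c dc / (r * r) * (1 - dot3 c c / (r * r))).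
  - unfold dot3 at 1. cbn [n1 n2 n3 fst snd]. unfold dot3. field. lra.
  - rewrite E. field. lra.
Qed.

Lemma nrm_perpA A B : dot3 (nrm (cross3 A B)) A = 0.
Proof. unfold nrm. cbv zeta. generalize (sqrt (dot3 (cross3 A B) (cross3 A B))). intro r.
  dd. unfold dot3, cross3, n1, n2, n3; cbn [fst snd]. unfold Rdiv. ring. Qed.

Lemma Ly_cross A B : 0 < dot3 A A -> dot3 A A = dot3 B B -> dot3 A B = 0 ->
  B = cross3 (nrm (cross3 A B)) A.
Proof.
  intros He H1 H2. unfold nrm. cbv zeta. rewrite (sqrt_cc A B H1 H2 He).
  assert (V : vsc (dot3 A A) B = vadd (cross3 (cross3 A B) A) (vsc (dot3 A B) A)).
  { dd. apply nil3_eq; unfold vsc, vadd, cross3, dot3, n1, n2, n3; cbn [fst snd]; ring. }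
  rewrite H2 in V.
  assert (He' : dot3 A A <> 0) by lra.
  revert V He'. generalize (dot3 A A). intros e V He'.
  assert (W : B = vsc (/ e) (vsc e B)).
  { apply nil3_eq; unfold vsc, n1, n2, n3; cbn [fst snd]; field; auto. }
  rewrite W at 1. rewrite V. clear W V. dd. apply nil3_eq; unfold vsc, vadd, cross3, n1, n2, n3; cbn [fst snd]; field; auto.
Qed.

Lemma kl_rot th N X Y : kl_formula (fiber_rot th N) (fiber_rot th X) (fiber_rot th Y) = fiber_rot th (kl_formula N X Y).
Proof.
  unfold kl_formula. rewrite rot_cross.
  replace (n3 (fiber_rot th N)) with (n3 N) by reflexivity.
  generalize (- / (n3 N * n3 N)). intro k. generalize (cross3 N X). intro u.
  dd. apply nil3_eq; unfold vsc, vadd, fiber_rot, n1, n2, n3; cbn [fst snd]; ring.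
Qed.

Lemma stereo_rot th n : stereo (fiber_rot th n) = Cmult (eitheta th) (stereo n).
Proof.
  dd. unfold stereo, fiber_rot, eitheta, Cmult, n1, n2, n3; cbn [fst snd]. f_equal; unfold Rdiv; ring.
Qed.

Lemma stereo_inj n m : dot3 n n = 1 -> dot3 m m = 1 -> 0 < n3 n -> 0 < n3 m -> stereo n = stereo m -> n = m.
Proof.
  destruct n as [[x1 x2] x3], m as [[y1 y2] y3].
  unfold dot3, stereo, n1, n2, n3; cbn [fst snd]. intros Hn Hm Pn Pm E.
  injection E. intros E2 E1.
  assert (F1 : x1 * (1 + y3) = y1 * (1 + x3)).
  { apply (f_equal (fun t => t * ((1 + x3) * (1 + y3)))) in E1. field_simplify in E1; try lra; lra. }
  assert (F2 : x2 * (1 + y3) = y2 * (1 + x3)).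
  { apply (f_equal (fun t => t * ((1 + x3) * (1 + y3)))) in E2. field_simplify in E2; try lra; lra. }
  assert (K : (x1 * x1 + x2 * x2) * ((1 + y3) * (1 + y3)) = (y1 * y1 + y2 * y2) * ((1 + x3) * (1 + x3))).
  { transitivity ((x1 * (1 + y3)) * (x1 * (1 + y3)) + (x2 * (1 + y3)) * (x2 * (1 + y3))); [ring|].
    rewrite F1, F2. ring. }
  assert (K2 : (1 - x3 * x3) * ((1 + y3) * (1 + y3)) = (1 - y3 * y3) * ((1 + x3) * (1 + x3))).
  { replace (1 - x3 * x3) with (x1 * x1 + x2 * x2) by lra. replace (1 - y3 * y3) with (y1 * y1 + y2 * y2) by lra. exact K. }
  assert (K3 : (1 + x3) * (1 + y3) * ((1 - x3) * (1 + y3) - (1 - y3) * (1 + x3)) = 0).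
  { transitivity ((1 - x3 * x3) * ((1 + y3) * (1 + y3)) - (1 - y3 * y3) * ((1 + x3) * (1 + x3))); [ring| lra]. }
  assert (K4 : (1 - x3) * (1 + y3) - (1 - y3) * (1 + x3) = 0).
  { apply Rmult_integral in K3. destruct K3 as [K3|K3]; [|exact K3].
    exfalso. apply Rmult_integral in K3. destruct K3; lra. }
  assert (Hc : x3 = y3) by lra. subst y3.
  assert (x1 = y1) by (apply (Rmult_eq_reg_r (1 + x3)); lra).
  assert (x2 = y2) by (apply (Rmult_eq_reg_r (1 + x3)); lra). subst; reflexivity.
Qed.

Lemma kl_comb m X Y a b : n3 m <> 0 ->
  kl_formula m (vadd (vsc a X) (vsc b Y)) (vadd (vsc (- b) X) (vsc a Y)) =
  vadd (vadd (vsc a (kl_formula m X Y)) (vsc b (cross3 m (kl_formula m X Y))))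
       (vsc (- b / (n3 m * n3 m)) (vadd (vsc (dot3 m m - 1) X) (vsc (- dot3 m X) m))).
Proof.
  intros H. unfold kl_formula. revert H. dd. intro H.
  apply nil3_eq; unfold vsc, vadd, cross3, dot3, n1, n2, n3 in *; cbn [fst snd] in *; field; auto.
Qed.

Lemma alg_b th N NXi NYi m NXj NYj a b :
  m = fiber_rot th N -> dot3 m m = 1 -> dot3 m NXj = 0 -> n3 m <> 0 ->
  fiber_rot th NXi = vadd (vsc a NXj) (vsc b NYj) ->
  fiber_rot th NYi = vadd (vsc (- b) NXj) (vsc a NYj) ->
  fiber_rot th (kl_formula N NXi NYi) =
  vadd (vsc a (kl_formula m NXj NYj)) (vsc b (cross3 m (kl_formula m NXj NYj))).
Proof.
  intros Hm H1 H2 H3 HX HY. rewrite <- kl_rot, <- Hm, HX, HY, kl_comb by auto.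
  rewrite H1, H2. generalize (kl_formula m NXj NYj). intro u.
  dd. apply nil3_eq; unfold vsc, vadd, n1, n2, n3; cbn [fst snd]; ring.
Qed.

Lemma alg_b2 m Aj Bj a b : dot3 m m = 1 -> dot3 m Aj = 0 -> Bj = cross3 m Aj ->
  cross3 m (vadd (vsc a Aj) (vsc b Bj)) = vadd (vsc (- b) Aj) (vsc a Bj).
Proof.
  intros H1 H2 H3. subst Bj. revert H1 H2. dd. unfold dot3, vsc, vadd, cross3, n1, n2, n3; cbn [fst snd].
  intros H1 H2. apply nil3_eq; cbn [fst snd n1 n2 n3]; nsatz.
Qed.

Lemma cross_comb a b A B :
  cross3 (vadd (vsc a A) (vsc b B)) (vadd (vsc (- b) A) (vsc a B)) = vsc (a * a + b * b) (cross3 A B).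
Proof. dd. apply nil3_eq; unfold vsc, vadd, cross3, n1, n2, n3; cbn [fst snd]; ring. Qed.

Lemma lc_lin F a b U V : left_comp F (vadd (vsc a U) (vsc b V)) = vadd (vsc a (left_comp F U)) (vsc b (left_comp F V)).
Proof. dd. apply nil3_eq; unfold left_comp, vsc, vadd, n1, n2, n3; cbn [fst snd]; ring. Qed.

Lemma g_lin2 (p q : R -> R) t0 dp dq (al be ga : R) :
  is_derive p t0 dp -> is_derive q t0 dq ->
  is_derive (fun t => ga + (al * p t - be * q t)) t0 (al * dp - be * dq).
Proof. intros. auto_derive; [exd | fixd; ring]. Qed.

Lemma g_lin2' (p q : R -> R) t0 dp dq (al be ga : R) :
  is_derive p t0 dp -> is_derive q t0 dq ->
  is_derive (fun t => ga + (al * p t + be * q t)) t0 (al * dp + be * dq).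
Proof. intros. auto_derive; [exd | fixd; ring]. Qed.

Lemma g_iso3 (p q r : R -> R) t0 dp dq dr (s c p1 p2 p3 : R) :
  is_derive p t0 dp -> is_derive q t0 dq -> is_derive r t0 dr ->
  is_derive (fun t => p3 + r t + / 2 * (p1 * (s * p t + c * q t) - p2 * (c * p t - s * q t))) t0
    (dr + / 2 * (p1 * (s * dp + c * dq) - p2 * (c * dp - s * dq))).
Proof. intros. auto_derive; [exd | fixd; ring]. Qed.

Lemma d_iso p th F t0 d : is_derive3 F t0 d ->
  is_derive3 (fun t => iso_act p th (F t)) t0 (diso p th d).
Proof.
  intros (H1 & H2 & H3). split; [|split].
  - exact (g_lin2 _ _ _ _ _ (cos th) (sin th) (n1 p) H1 H2).
  - exact (g_lin2' _ _ _ _ _ (sin th) (cos th) (n2 p) H1 H2).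
  - exact (g_iso3 _ _ _ _ _ _ _ (sin th) (cos th) (n1 p) (n2 p) (n3 p) H1 H2 H3).
Qed.

Lemma d_rot th F t0 d : is_derive3 F t0 d ->
  is_derive3 (fun t => fiber_rot th (F t)) t0 (fiber_rot th d).
Proof.
  intros (H1 & H2 & H3). split; [|split].
  - eapply is_derive_ext; [|exact (g_lin2 _ _ _ _ _ (cos th) (sin th) 0 H1 H2)]. intro t; cbn; ring.
  - eapply is_derive_ext; [|exact (g_lin2' _ _ _ _ _ (sin th) (cos th) 0 H1 H2)]. intro t; cbn; ring.
  - exact H3.
Qed.

Definition ninv (x : Nil3) : Nil3 := (- n1 x, - n2 x, - n3 x).
Definition Pd (U V dU dV : Nil3) : Nil3 :=
  (n1 dU - n1 dV, n2 dU - n2 dV,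
   n3 dU - n3 dV + / 2 * (n1 dU * (- n2 V) + n1 U * (- n2 dV) - (n2 dU * (- n1 V) + n2 U * (- n1 dV)))).

Lemma g_P3 (u1 u2 u3 v1 v2 v3 : R -> R) t0 du1 du2 du3 dv1 dv2 dv3 :
  is_derive u1 t0 du1 -> is_derive u2 t0 du2 -> is_derive u3 t0 du3 ->
  is_derive v1 t0 dv1 -> is_derive v2 t0 dv2 -> is_derive v3 t0 dv3 ->
  is_derive (fun t => u3 t + - v3 t + / 2 * (u1 t * - v2 t - u2 t * - v1 t)) t0
   (du3 - dv3 + / 2 * (du1 * (- v2 t0) + u1 t0 * (- dv2) - (du2 * (- v1 t0) + u2 t0 * (- dv1)))).
Proof. intros. auto_derive; [exd | fixd; ring]. Qed.

Lemma g_sub (u v : R -> R) t0 du dv : is_derive u t0 du -> is_derive v t0 dv ->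
  is_derive (fun t => u t + - v t) t0 (du - dv).
Proof. intros. auto_derive; [exd | fixd; ring]. Qed.

Lemma d_P U V t0 dU dV : is_derive3 U t0 dU -> is_derive3 V t0 dV ->
  is_derive3 (fun t => nil_mul (U t) (ninv (V t))) t0 (Pd (U t0) (V t0) dU dV).
Proof.
  intros (H1 & H2 & H3) (K1 & K2 & K3). split; [|split].
  - exact (g_sub _ _ _ _ _ H1 K1).
  - exact (g_sub _ _ _ _ _ H2 K2).
  - exact (g_P3 _ _ _ _ _ _ _ _ _ _ _ _ _ H1 H2 H3 K1 K2 K3).
Qed.

Lemma Pd_zero U V dU dV : left_comp U dU = left_comp V dV -> Pd U V dU dV = (0,0,0).
Proof.
  intros E. assert (E1 := f_equal n1 E). assert (E2 := f_equal n2 E). assert (E3 := f_equal n3 E).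
  revert E1 E2 E3. clear E. dd. unfold left_comp, Pd, n1, n2, n3; cbn [fst snd]. intros E1 E2 E3.
  subst. f_equal; [f_equal|]; try ring. lra.
Qed.

Lemma uniq3 F G t0 d1 d2 : is_derive3 F t0 d1 -> is_derive3 G t0 d2 ->
  locally t0 (fun t => F t = G t) -> d1 = d2.
Proof.
  intros (H1 & H2 & H3) (K1 & K2 & K3) L. apply nil3_eq.
  - rewrite <- (is_derive_unique _ _ _ H1). apply is_derive_unique.
    apply (is_derive_ext_loc (fun t => n1 (G t))); [|exact K1]. apply filter_imp with (2 := L). intros t E; rewrite E; reflexivity.
  - rewrite <- (is_derive_unique _ _ _ H2). apply is_derive_unique.
    apply (is_derive_ext_loc (fun t => n2 (G t))); [|exact K2]. apply filter_imp with (2 := L). intros t E; rewrite E; reflexivity.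
  - rewrite <- (is_derive_unique _ _ _ H3). apply is_derive_unique.
    apply (is_derive_ext_loc (fun t => n3 (G t))); [|exact K3]. apply filter_imp with (2 := L). intros t E; rewrite E; reflexivity.
Qed.

Section Main.
Variable X : Type.
Variable A : atlas X.
Variable f : X -> Nil3.
Variable g : X -> C.
Variable gam : X -> X.
Hypothesis Hrs : riemann_surface A.
Hypothesis Hconf : conformal_immersion A f.
Hypothesis Hmin : minimal A f.
Hypothesis Hnv : nowhere_vertical A f.
Hypothesis Hup : upward_normal A f.
Hypothesis Hg : is_normal_gauss_map A f g.
Hypothesis Haut : automorphism A gam.

Lemma Hop : forall i, open (cdom A i).
Proof. exact (proj1 Hrs). Qed.
Lemma Hsm : smooth_map A f.
Proof. exact (proj1 Hconf). Qed.

Lemma setup i z0 : cdom A i z0 -> exists j (h : C -> C) (O : C -> Prop), open O /\ O z0 /\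
  forall z, O z -> cdom A i z /\ cdom A j (h z) /\ cpar A j (h z) = gam (cpar A i z) /\ C_holo_at h z.
Proof.
  intros Hz.
  destruct Hrs as (_ & _ & Hcov & Htr & _ & _).
  destruct (Hcov (gam (cpar A i z0))) as (j & w0 & Hw0 & Ew0).
  destruct Haut as (gam' & _ & _ & (Hcont & Hhol) & _).
  destruct (Hhol i j) as (h & Hh).
  exists j, h, (fun z => cdom A i z /\ exists w, cdom A j w /\ cpar A j w = gam (cpar A i z)).
  split; [|split].
  - assert (So : s_open A (fun p => exists w, cdom A j w /\ cpar A j w = p)).
    { intro i'. exact (proj1 (Htr i' j)). }
    exact (Hcont _ So i).
  - split; [exact Hz | exists w0; auto].
  - intros z (Hzi & Hex). destruct (Hh z Hzi Hex) as (H1 & H2 & H3). auto.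
Qed.


Lemma loc_x (O : C -> Prop) x y : open O -> O (x,y) -> locally x (fun t => O (t, y)).
Proof. intros HO Hz. apply (locally_2d_1d_const_y (fun a b => O (a,b))). exact (open_loc2d O (x,y) HO Hz). Qed.
Lemma loc_y (O : C -> Prop) x y : open O -> O (x,y) -> locally y (fun t => O (x, t)).
Proof. intros HO Hz. apply (locally_2d_1d_const_x (fun a b => O (a,b))). exact (open_loc2d O (x,y) HO Hz). Qed.

Lemma dF_h j (h : C -> C) x y a b : is_derive (K := C_AbsRing) h (x,y) (a,b) -> cdom A j (h (x,y)) ->
  is_derive3 (fun t => f (cpar A j (h (t, y)))) x (vadd (vsc a (Fx A f j (h (x,y)))) (vsc b (Fy A f j (h (x,y))))) /\
  is_derive3 (fun t => f (cpar A j (h (x, t)))) y (vadd (vsc (- b) (Fx A f j (h (x,y)))) (vsc a (Fy A f j (h (x,y))))).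
Proof.
  intros Hd Hw. split.
  - exact (gc_F _ _ _ _ _ _ _ _ (gc_hx _ _ _ Hop Hsm j h (x,y) a b Hd Hw)).
  - exact (gc_F _ _ _ _ _ _ _ _ (gc_hy _ _ _ Hop Hsm j h (x,y) a b Hd Hw)).
Qed.

Lemma dF_i i x y : cdom A i (x,y) ->
  is_derive3 (fun t => f (cpar A i (t, y))) x (Fx A f i (x,y)) /\
  is_derive3 (fun t => f (cpar A i (x, t))) y (Fy A f i (x,y)).
Proof.
  intros Hz. split.
  - assert (D := gc_F _ _ _ _ _ _ _ _ (gc_x _ _ _ Hsm i (x,y) Hz)). simpl in D. rewrite v10 in D. exact D.
  - assert (D := gc_F _ _ _ _ _ _ _ _ (gc_y _ _ _ Hsm i (x,y) Hz)). simpl in D. rewrite v01 in D. exact D.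
Qed.

Lemma part_a_local p th : (forall x, f (gam x) = iso_act p th (f x)) ->
  forall i z, cdom A i z -> g (gam (cpar A i z)) = Cmult (eitheta th) (g (cpar A i z)).
Proof.
  intros Hrho i z Hz. destruct (setup i z Hz) as (j & h & O & HO & Oz & HOp).
  destruct (HOp z Oz) as (Hzi & Hw & Ecp & Hhol).
  destruct Hhol as [[a b] Hd].
  destruct z as [x y].
  destruct (dF_h j h x y a b Hd Hw) as (Dx1 & Dy1).
  destruct (dF_i i x y Hzi) as (Dx2 & Dy2).
  assert (Ex : vadd (vsc a (Fx A f j (h (x,y)))) (vsc b (Fy A f j (h (x,y)))) = diso p th (Fx A f i (x,y))).
  { apply (uniq3 _ _ _ _ _ Dx1 (d_iso p th _ _ _ Dx2)).
    apply filter_imp with (2 := loc_x O x y HO Oz). intros t Ot.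
    destruct (HOp _ Ot) as (_ & _ & E & _). cbv beta. transitivity (f (gam (cpar A i (t, y)))); [f_equal; exact E | apply Hrho]. }
  assert (Ey : vadd (vsc (- b) (Fx A f j (h (x,y)))) (vsc a (Fy A f j (h (x,y)))) = diso p th (Fy A f i (x,y))).
  { apply (uniq3 _ _ _ _ _ Dy1 (d_iso p th _ _ _ Dy2)).
    apply filter_imp with (2 := loc_y O x y HO Oz). intros t Ot.
    destruct (HOp _ Ot) as (_ & _ & E & _). cbv beta. transitivity (f (gam (cpar A i (x, t)))); [f_equal; exact E | apply Hrho]. }
  assert (EF : f (cpar A j (h (x,y))) = iso_act p th (f (cpar A i (x,y)))) by (transitivity (f (gam (cpar A i (x,y)))); [f_equal; exact Ecp | apply Hrho]).
  assert (RX : fiber_rot th (Lx A f i (x,y)) = vadd (vsc a (Lx A f j (h (x,y)))) (vsc b (Ly A f j (h (x,y))))).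
  { unfold Lx, Ly. rewrite <- lc_lin, Ex, <- (lc_iso p th), EF. reflexivity. }
  assert (RY : fiber_rot th (Ly A f i (x,y)) = vadd (vsc (- b) (Lx A f j (h (x,y)))) (vsc a (Ly A f j (h (x,y))))).
  { unfold Lx, Ly. rewrite <- lc_lin, Ey, <- (lc_iso p th), EF. reflexivity. }
  assert (Hab : 0 < a * a + b * b).
  { destruct (conf_at _ _ _ Hconf i (x,y) Hzi) as (_ & P & _).
    rewrite <- (rot_dot th), RX in P.
    destruct (Req_dec a 0) as [Ha|Ha]; [destruct (Req_dec b 0) as [Hb|Hb]|].
    - subst. exfalso. revert P. unfold dot3, vadd, vsc, n1, n2, n3; cbn [fst snd]. lra.
    - nra. - nra. }
  assert (EN : unit_normal A f j (h (x,y)) = fiber_rot th (unit_normal A f i (x,y))).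
  { rewrite !unit_normal_nrm, <- nrm_rot, <- rot_cross, RX, RY, cross_comb.
    rewrite nrm_scale; auto. apply cc_pos; auto. }
  rewrite <- Ecp, (Hg j _ Hw), (Hg i _ Hzi), EN. apply stereo_rot.
Qed.


Lemma part_a : forall (p : Nil3) (th : R), (forall x, f (gam x) = iso_act p th (f x)) ->
      forall x, g (gam x) = Cmult (eitheta th) (g x).
Proof.
  intros p th Hrho x. destruct Hrs as (_ & _ & Hcov & _).
  destruct (Hcov x) as (i & z & Hz & E). subst x. apply (part_a_local p th Hrho i z Hz).
Qed.

Definition Pm th x := nil_mul (f (gam x)) (ninv (fiber_rot th (f x))).

Lemma const_1d (F : R -> R) a b : (forall t, Rmin a b <= t <= Rmax a b -> is_derive F t 0) -> F b = F a.
Proof.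
  intros H. destruct (MVT_gen F a b (fun _ => 0)) as (c & _ & E).
  - intros t Ht. apply H. lra.
  - intros t Ht. apply continuity_pt_filterlim. apply (ex_derive_continuous (K := R_AbsRing) (V := R_NormedModule) F t). exists 0. apply H. exact Ht.
  - rewrite Rmult_0_l in E. lra.
Qed.

Lemma box_const (G : C -> Nil3) (O : C -> Prop) z0 : open O -> O z0 ->
  (forall x y, O (x,y) -> is_derive3 (fun t => G (t, y)) x (0,0,0) /\ is_derive3 (fun t => G (x, t)) y (0,0,0)) ->
  locally_2d (fun a b => O (a,b) /\ G (a,b) = G z0) (fst z0) (snd z0).
Proof.
  intros HO Oz HD. destruct (open_loc2d O z0 HO Oz) as [d Hd].
  exists d. intros a b Ha Hb. split; [apply Hd; auto|].
  destruct z0 as [x0 y0]. simpl in *.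
  assert (S1 : forall t, Rmin y0 b <= t <= Rmax y0 b -> O (a, t)).
  { intros t Ht. apply Hd; auto. unfold Rmin, Rmax in Ht. destruct (Rle_dec y0 b);
    apply Rabs_def1; [ | | |]; try (apply Rabs_def2 in Hb; lra). }
  assert (S2 : forall t, Rmin x0 a <= t <= Rmax x0 a -> O (t, y0)).
  { intros t Ht. apply Hd; [|rewrite Rminus_diag, Rabs_R0; apply cond_pos]. unfold Rmin, Rmax in Ht. destruct (Rle_dec x0 a);
    apply Rabs_def1; try (apply Rabs_def2 in Ha; lra). }
  transitivity (G (a, y0)); apply nil3_eq.
  all: first
   [ apply (const_1d (fun t => n1 (G (a, t)))); intros t Ht; exact (proj1 (proj2 (HD _ _ (S1 t Ht))))
   | apply (const_1d (fun t => n2 (G (a, t)))); intros t Ht; exact (proj1 (proj2 (proj2 (HD _ _ (S1 t Ht)))))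
   | apply (const_1d (fun t => n3 (G (a, t)))); intros t Ht; exact (proj2 (proj2 (proj2 (HD _ _ (S1 t Ht)))))
   | apply (const_1d (fun t => n1 (G (t, y0)))); intros t Ht; exact (proj1 (proj1 (HD _ _ (S2 t Ht))))
   | apply (const_1d (fun t => n2 (G (t, y0)))); intros t Ht; exact (proj1 (proj2 (proj1 (HD _ _ (S2 t Ht)))))
   | apply (const_1d (fun t => n3 (G (t, y0)))); intros t Ht; exact (proj2 (proj2 (proj1 (HD _ _ (S2 t Ht))))) ].
Qed.

Lemma is_derive3_ext_loc (F G : R -> Nil3) t0 d : locally t0 (fun t => F t = G t) ->
  is_derive3 F t0 d -> is_derive3 G t0 d.
Proof.
  intros L (H1 & H2 & H3). split; [|split];
  [ apply (is_derive_ext_loc (fun t => n1 (F t))) | apply (is_derive_ext_loc (fun t => n2 (F t)))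
  | apply (is_derive_ext_loc (fun t => n3 (F t))) ]; auto;
  apply filter_imp with (2 := L); intros t E; rewrite E; reflexivity.
Qed.

Section PartB.
Variable th : R.
Hypothesis Hgs : forall x, g (gam x) = Cmult (eitheta th) (g x).
Variables (i j : chart A) (h : C -> C) (O : C -> Prop).
Hypothesis HO : open O.
Hypothesis HOp : forall z, O z -> cdom A i z /\ cdom A j (h z) /\ cpar A j (h z) = gam (cpar A i z) /\ C_holo_at h z.

Lemma unit_up k z : cdom A k z -> dot3 (unit_normal A f k z) (unit_normal A f k z) = 1 /\ 0 < n3 (unit_normal A f k z).
Proof. intros Hz. split; [rewrite unit_normal_nrm; apply nrm_unit, cc_pos; auto | apply Hup; auto]. Qed.

Lemma N_rel z : O z -> unit_normal A f j (h z) = fiber_rot th (unit_normal A f i z).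
Proof.
  intros Oz. destruct (HOp z Oz) as (Hzi & Hw & Ecp & _).
  destruct (unit_up j _ Hw) as (U1 & P1). destruct (unit_up i _ Hzi) as (U2 & P2).
  apply stereo_inj; [exact U1 | rewrite rot_dot; exact U2 | exact P1 | exact P2 |].
  rewrite stereo_rot, <- (Hg j _ Hw), <- (Hg i _ Hzi), <- Hgs. f_equal. exact Ecp.
Qed.

Lemma part_b_deriv x y : O (x,y) ->
  is_derive3 (fun t => Pm th (cpar A i (t, y))) x (0,0,0) /\
  is_derive3 (fun t => Pm th (cpar A i (x, t))) y (0,0,0).
Proof.
  intros Oz. destruct (HOp _ Oz) as (Hzi & Hw & Ecp & Hhol).
  destruct Hhol as [[a b] Hd].
  set (w := h (x,y)) in *.
  assert (NX1 := gc_N _ _ _ _ _ _ _ _ (gc_hx _ _ _ Hop Hsm j h (x,y) a b Hd Hw) (cc_pos _ _ _ Hconf j _ Hw)).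
  assert (NY1 := gc_N _ _ _ _ _ _ _ _ (gc_hy _ _ _ Hop Hsm j h (x,y) a b Hd Hw) (cc_pos _ _ _ Hconf j _ Hw)).
  assert (NX2 := gc_N _ _ _ _ _ _ _ _ (gc_x _ _ _ Hsm i (x,y) Hzi) (cc_pos _ _ _ Hconf i _ Hzi)).
  assert (NY2 := gc_N _ _ _ _ _ _ _ _ (gc_y _ _ _ Hsm i (x,y) Hzi) (cc_pos _ _ _ Hconf i _ Hzi)).
  simpl in NX2, NY2. rewrite v10 in NX2. rewrite v01 in NY2.
  assert (EX : vadd (vsc a (NXv X A f j w)) (vsc b (NYv X A f j w)) = fiber_rot th (NXv X A f i (x,y))).
  { apply (uniq3 _ _ _ _ _ NX1 (d_rot th _ _ _ NX2)).
    apply filter_imp with (2 := loc_x O x y HO Oz). intros t Ot. cbv beta. apply N_rel. exact Ot. }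
  assert (EY : vadd (vsc (- b) (NXv X A f j w)) (vsc a (NYv X A f j w)) = fiber_rot th (NYv X A f i (x,y))).
  { apply (uniq3 _ _ _ _ _ NY1 (d_rot th _ _ _ NY2)).
    apply filter_imp with (2 := loc_y O x y HO Oz). intros t Ot. cbv beta. apply N_rel. exact Ot. }
  set (m := unit_normal A f j w).
  assert (Hm : m = fiber_rot th (unit_normal A f i (x,y))) by (apply N_rel; exact Oz).
  destruct (unit_up j _ Hw) as (Um & _).
  assert (Pm0 : dot3 m (NXv X A f j w) = 0).
  { unfold m, NXv. rewrite unit_normal_nrm. apply nrm_perp. apply cc_pos; auto. }
  assert (m3 : n3 m <> 0) by (apply Hnv; auto).
  assert (KLi := KL_chart _ _ _ Hop Hsm Hconf Hmin Hnv i _ Hzi).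
  assert (KLj := KL_chart _ _ _ Hop Hsm Hconf Hmin Hnv j _ Hw).
  destruct (conf_at _ _ _ Hconf i _ Hzi) as (Ci1 & Ci2 & Ci3).
  destruct (conf_at _ _ _ Hconf j _ Hw) as (Cj1 & Cj2 & Cj3).
  assert (LYj : Ly A f j w = cross3 m (Lx A f j w)) by (apply Ly_cross; auto).
  assert (LYi : Ly A f i (x,y) = cross3 (unit_normal A f i (x,y)) (Lx A f i (x,y))) by (apply Ly_cross; auto).
  assert (RX : fiber_rot th (Lx A f i (x,y)) = vadd (vsc a (Lx A f j w)) (vsc b (Ly A f j w))).
  { rewrite KLi, LYj, KLj. fold m. apply alg_b; auto. }
  assert (RY : fiber_rot th (Ly A f i (x,y)) = vadd (vsc (- b) (Lx A f j w)) (vsc a (Ly A f j w))).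
  { rewrite LYi, <- rot_cross, <- Hm, RX. apply alg_b2; auto.
    unfold m. rewrite unit_normal_nrm. apply nrm_perpA. }
  destruct (dF_h j h x y a b Hd Hw) as (Dx1 & Dy1).
  destruct (dF_i i x y Hzi) as (Dx2 & Dy2).
  split.
  - assert (D := d_P _ _ _ _ _ Dx1 (d_rot th _ _ _ Dx2)).
    rewrite Pd_zero in D.
    + revert D. apply is_derive3_ext_loc.
      apply filter_imp with (2 := loc_x O x y HO Oz). intros t Ot. cbv beta. unfold Pm.
      destruct (HOp _ Ot) as (_ & _ & E & _). f_equal. f_equal. exact E.
    + rewrite lc_lin, lc_rot. symmetry. exact RX.
  - assert (D := d_P _ _ _ _ _ Dy1 (d_rot th _ _ _ Dy2)).
    rewrite Pd_zero in D.
    + revert D. apply is_derive3_ext_loc.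
      apply filter_imp with (2 := loc_y O x y HO Oz). intros t Ot. cbv beta. unfold Pm.
      destruct (HOp _ Ot) as (_ & _ & E & _). f_equal. f_equal. exact E.
    + rewrite lc_lin, lc_rot. symmetry. exact RY.
Qed.

End PartB.


Lemma Pm_locconst th : (forall x, g (gam x) = Cmult (eitheta th) (g x)) ->
  forall i z, cdom A i z -> locally z (fun w => cdom A i w /\ Pm th (cpar A i w) = Pm th (cpar A i z)).
Proof.
  intros Hgs i z Hz. destruct (setup i z Hz) as (j & h & O & HO & Oz & HOp).
  assert (B := box_const (fun w => Pm th (cpar A i w)) O z HO Oz
     (fun x y Oxy => part_b_deriv th Hgs i j h O HO HOp x y Oxy)).
  apply locally_2d_locally in B. destruct z as [x y]. simpl in B.
  apply filter_imp with (2 := B). intros [a b] (Oab & E). simpl in *. split; [|exact E].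
  exact (proj1 (HOp _ Oab)).
Qed.

Lemma part_b : forall th : R, (forall x, g (gam x) = Cmult (eitheta th) (g x)) ->
      exists p : Nil3, forall x, f (gam x) = iso_act p th (f x).
Proof.
  intros th Hgs.
  destruct (classic (exists x0 : X, True)) as [[x0 _]|Hne].
  - exists (Pm th x0).
    assert (HU : forall x, Pm th x = Pm th x0).
    { destruct Hrs as (_ & _ & _ & _ & _ & Hcon).
      apply (Hcon (fun x => Pm th x = Pm th x0) (fun x => Pm th x <> Pm th x0)).
      - intros i z (Hz & E). generalize (Pm_locconst th Hgs i z Hz). apply filter_imp.
        intros w (Hw & E'). split; auto. rewrite E'. exact E.
      - intros i z (Hz & E). generalize (Pm_locconst th Hgs i z Hz). apply filter_imp.
        intros w (Hw & E'). split; auto. rewrite E'. exact E.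
      - intro p. destruct (classic (Pm th p = Pm th x0)); auto.
      - intros p (H1 & H2). auto.
      - exists x0. reflexivity. }
    intro x. rewrite <- (HU x). unfold Pm, iso_act, nil_mul, ninv.
    generalize (fiber_rot th (f x)). generalize (f (gam x)). intros u v.
    destruct u as [[u1 u2] u3], v as [[v1 v2] v3]. unfold n1, n2, n3; cbn [fst snd].
    f_equal; [f_equal|]; field.
  - exists (0,0,0). intro x. exfalso. apply Hne. exists x. exact I.
Qed.

End Main.

Theorem theorem1p1 (X : Type) (A : atlas X) (f : X -> Nil3) (g : X -> C)
  (gam : X -> X) :
  riemann_surface A ->
  conformal_immersion A f -> minimal A f ->
  nowhere_vertical A f -> upward_normal A f ->
  is_normal_gauss_map A f g ->
  automorphism A gam ->
  (forall (p : Nil3) (theta : R),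
      (forall x, f (gam x) = iso_act p theta (f x)) ->
      forall x, g (gam x) = Cmult (eitheta theta) (g x)) /\
  (forall theta : R,
      (forall x, g (gam x) = Cmult (eitheta theta) (g x)) ->
      exists p : Nil3, forall x, f (gam x) = iso_act p theta (f x)).
Proof.
  intros H1 H2 H3 H4 H5 H6 H7. split.
  - eapply part_a; eauto.
  - eapply part_b; eauto.
Qed.
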